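(* Every cycle graph $C_n$ with $n>3$ vertices is a skeleton.
   Context: For simple graphs $G$ and $H$, $H$ is a skeletal of $G$ if there is a surjective map $\phi:V(G)\to V(H)$ such that for all distinct vertices $a,b$ of $G$: $a$ and $b$ are adjacent in $G$ if and only if $\phi(a)=\phi(b)$ or $\phi(a)$ and $\phi(b)$ are adjacent in $H$. A skeletal $H$ of $G$ under $\phi$ is proper if $|\phi^{-1}(v)|\ge 2$ for at least one vertex $v$ of $H$. A graph is a skeleton if it has no proper skeletal. *)

(* Defs.v *)
From mathcomp Require Import all_boot.
Set Implicit Arguments. Unset Strict Implicit. Unset Printing Implicit Defensive.

Definition simple_graph (V : Type) (e : V -> V -> Prop) : Prop :=
  (forall x, ~ e x x) /\ (forall x y, e x y -> e y x).

Definition skeletal_under (V U : Type) (eG : V -> V -> Prop) (eH : U -> U -> Prop)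
  (phi : V -> U) : Prop :=
  (forall u : U, exists v : V, phi v = u) /\
  (forall a b : V, a <> b -> (eG a b <-> (phi a = phi b \/ eH (phi a) (phi b)))).

Definition proper_skeletal_under (V U : Type) (eG : V -> V -> Prop) (eH : U -> U -> Prop)
  (phi : V -> U) : Prop :=
  skeletal_under eG eH phi /\ exists a b : V, a <> b /\ phi a = phi b.

Definition skeleton (V : Type) (eG : V -> V -> Prop) : Prop :=
  forall (U : Type) (eH : U -> U -> Prop) (phi : V -> U),
    simple_graph eH -> ~ proper_skeletal_under eG eH phi.

Definition cycle_adj (n : nat) (i j : 'I_n) : Prop :=
  (val j = (val i).+1 %% n) \/ (val i = (val j).+1 %% n).

(* Main.v *)
Require Import Defs.
From mathcomp Require Import all_boot.
From mathcomp Require Import zify.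

Lemma mod2 (n a : nat) : 0 < n -> a < n + n -> (a %% n = a /\ a < n) \/ (a %% n = a - n /\ n <= a).
Proof.
move=> n0 ha; case: (ltnP a n) => h.
  by left; rewrite modn_small.
right; split=> //.
have -> : a = (a - n) + n by rewrite subnK.
by rewrite modnDr modn_small ?addnK //; lia.
Qed.

Lemma key (n : nat) (hn : 3 < n) (U : Type) (eH : U -> U -> Prop) (phi : 'I_n -> U)
  (x y : 'I_n) : nat_of_ord y = (nat_of_ord x).+1 %% n -> phi x = phi y -> x <> y ->
  (forall a b : 'I_n, a <> b -> (cycle_adj a b <-> (phi a = phi b \/ eH (phi a) (phi b)))) -> False.
Proof.
move=> hy hp hxy H.
have n0 : 0 < n by lia.
pose c := Ordinal (ltn_pmod (nat_of_ord x + n - 1) n0).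
have hx := ltn_ord x.
have m1 := mod2 n ((nat_of_ord x).+1) n0 ltac:(lia).
have m2 := mod2 n (nat_of_ord x + n - 1) n0 ltac:(lia).
have m3 := mod2 n (((nat_of_ord x + n - 1) %% n).+1) n0 ltac:(have := ltn_pmod (nat_of_ord x + n - 1) n0; lia).

have ecx : cycle_adj c x.
  left; rewrite /=.
  set A := (nat_of_ord x + n - 1) %% n in m2 m3 *.
  set B := A.+1 %% n in m3 *.
  clearbody A B; clear -m1 m2 m3 hx hn; lia.
have cx : c <> x.
  move=> e; have := f_equal val e; rewrite /=.
  set A := (nat_of_ord x + n - 1) %% n in m2 m3 *.
  clearbody A; clear -m2 m3 hx hn; lia.
have cy : c <> y.
  move=> e; have := f_equal val e; rewrite /= hy.
  set A := (nat_of_ord x + n - 1) %% n in m2 m3 *.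
  set B := (nat_of_ord x).+1 %% n in m1 *.
  clearbody A B; clear -m1 m2 m3 hx hn; lia.
have hcy := (H c x cx).1 ecx; rewrite hp in hcy; move/(H c y cy): hcy.
rewrite /cycle_adj /= => hcy.
have hyn := ltn_ord y.
have m5 := mod2 n ((nat_of_ord y).+1) n0 ltac:(clear -hyn; lia).
clear H hp hxy cx cy ecx.
move: hcy m5 hy m1 m2 m3.
set A := (nat_of_ord x + n - 1) %% n.
set B := (nat_of_ord x).+1 %% n.
set C := A.+1 %% n.
set D := (nat_of_ord y).+1 %% n.
clearbody A B C D; lia.
Qed.

Theorem mainTheorem5 (n : nat) (hn : 3 < n) : skeleton (@cycle_adj n).
Proof.
move=> U eH phi _ [[_ H] [a [b [hab hp]]]].
have := (H a b hab).2 (or_introl hp); case=> h.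
  exact: (@key n hn U eH phi a b h hp hab H).
exact: (@key n hn U eH phi b a h (esym hp) (fun e => hab (esym e)) H).
Qed.
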